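(* Let $Q, N, K \ge 1$ and $L_{\max}\ge 0$ be integers and $T_{\mathrm{PRI}}>0$. Let $\mathbf{s}_m = (s_m(1),\dots,s_m(N))^T \in \mathbb{C}^N$ be unimodular, i.e. $|s_m(n)|=1$ for all $n$. For $k=1,\dots,K$ let $L^{(k)} \in\{0,\dots,L_{\max}\}$ be integers, $\beta^{(k)}\in\mathbb{C}$, and let $f^{(k)}\in\mathbb{R}$ be Doppler frequencies which are almost surely pairwise distinct. For $0\le L\le L_{\max}$ put $\mathbf{C}_{L} = [\mathbf{0}_{N\times L},\ \mathbf{I}_N,\ \mathbf{0}_{N\times (L_{\max}-L)}]$, and define $\mathbf{D}=[\mathbf{d}^{(1)},\dots,\mathbf{d}^{(K)}]\in\mathbb{C}^{Q\times K}$ with $\mathbf{d}^{(k)} = [1, e^{\mathrm{j}2\pi f^{(k)}T_{\mathrm{PRI}}},\dots, e^{\mathrm{j}2\pi f^{(k)}(Q-1)T_{\mathrm{PRI}}}]^T$, $\boldsymbol{\Lambda}=\mathrm{diag}(\beta^{(1)},\dots,\beta^{(K)})$, $\boldsymbol{\Gamma} = [\mathbf{C}_{L^{(1)}}^T\mathbf{s}_m,\dots,\mathbf{C}_{L^{(K)}}^T\mathbf{s}_m]^T$, and $\mathbf{Z}=\mathbf{D}\boldsymbol{\Lambda}\boldsymbol{\Gamma}\in\mathbb{C}^{n_1\times n_2}$ with $n_1=Q$, $n_2 = N+L_{\max}$. Define $g:\mathbb{R}\to\mathbb{R}$ by $g(x)=\lceil x\rceil - x$ if $\lceil x\rceil -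 x\le \tfrac12$ and $g(x) = x-\lfloor x\rfloor$ otherwise; set $\xi_t = \min_{i\neq j} g\left(T_{\mathrm{PRI}}|f^{(i)}-f^{(j)}|\right)$ and $\beta_Q(\xi_t) = \sup_{x\in[\xi_t,1/2]} \frac{\sin^2(\pi Q x)}{\sin^2(\pi x)}$. For $i,j\in\{1,\dots,K\}$ let $l_{ij}=L^{(i)}-L^{(j)}$ and $\gamma(l_{ij}) = \sum_{k=l_{ij}+1}^{N} s_m(k)\, s_m^*(k-l_{ij})$ (terms whose indices fall outside $\{1,\dots,N\}$ being omitted). If $K \le \frac{Q}{\sqrt{\beta_Q(\xi_t)}}$, then the coherences of $\mathbf{Z}$ satisfy $$\mu(U) \le \frac{Q}{Q-(K-1)\sqrt{\beta_Q(\xi_t)}},\qquad \mu(V)\le \frac{N+L_{\max}}{N - \sqrt{K-1}\sqrt{\sum_{i=1}^K\sum_{j\ne i}|\gamma(l_{ij})|^2}},$$ and, with probability $1$, $\mathbf{Z}$ obeys conditions A0 and A1 with $\mu_0 = \max\{\mu(U),\mu(V)\}$ and $\mu_1 = \sqrt{K}\,\mu_0$.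
   Context: Coherence: let $U\subseteq\mathbb{C}^{n_1}$ and $V\subseteq \mathbb{C}^{n_2}$ be the column space and row space of $\mathbf{Z}$ (spanned by the left, resp. right, singular vectors of the compact SVD $\mathbf{Z}=\sum_k \rho_k \mathbf{u}_k\mathbf{v}_k^H$). With $\mathbf{U}$ a matrix whose columns are the left singular vectors, $\mu(U) = \frac{n_1}{K}\max_{1\le i\le n_1}\|\mathbf{U}^{(i)}\|_2^2$, where $\mathbf{U}^{(i)}$ is the $i$-th row of $\mathbf{U}$ (equivalently $\frac{n_1}{K}\max_i \|P_U e_i\|^2$ with $P_U$ the orthogonal projection onto $U$); $\mu(V)$ is defined analogously with $n_2$ and the right singular vectors. Condition A0: $\max(\mu(U),\mu(V))\le\mu_0$. Condition A1: every entry of $\sum_{i}\mathbf{u}_i\mathbf{v}_i^H$ is bounded in absolute value by $\mu_1\sqrt{K/(n_1 n_2)}$. Here $\mathrm{j}=\sqrt{-1}$ and $^*$ denotes complex conjugation. The setting models the data matrix of one transmit–receive pair of a widely separated MIMO radar with $K$ targets over $Q$ pulses.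
   Formalization: The bound on μ(V) is asserted only when its denominator $N - \sqrt{K-1}\sqrt{\sum_{i=1}^K\sum_{j\ne i}|\gamma(l_{ij})|^2}$ is positive. The statement above fails without it. *)

(* Defs.v *)
From HB Require Import structures.
From mathcomp Require Import all_boot all_order all_algebra.
From mathcomp Require Import all_classical all_reals all_analysis.
From mathcomp Require Import complex.
Set Implicit Arguments. Unset Strict Implicit. Unset Printing Implicit Defensive.
Import Order.TTheory GRing.Theory Num.Theory.
Local Open Scope ring_scope.
Local Open Scope classical_set_scope.

Section Defs.
Variable R : realType.
Local Notation C := R[i].

Definition cabs (z : C) : R := Normc.normc z.
Definition cconj (z : C) : C := conjc z.

Definition mxH m n (A : 'M[C]_(m, n)) : 'M[C]_(n, m) := (map_mx cconj A)^T.

Definition expj (theta : R) : C := Complex (cos theta) (sin theta).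

(* C_L = [0_{N x L}, I_N, 0_{N x (Lmax - L)}] *)
Definition Cshift (N Lmax L : nat) : 'M[C]_(N, N + Lmax) :=
  \matrix_(i < N, p < N + Lmax) ((nat_of_ord p == i + L)%N)%:R.

Definition Dmat (Q K : nat) (T : R) (f : 'I_K -> R) : 'M[C]_(Q, K) :=
  \matrix_(q < Q, k < K) expj (2 * pi * f k * q%:R * T).

Definition Lmat K (beta : 'I_K -> C) : 'M[C]_K := diag_mx (\row_k beta k).

Definition Gmat (N Lmax K : nat) (L : 'I_K -> nat) (s : 'cV[C]_N)
  : 'M[C]_(K, N + Lmax) :=
  \matrix_(k < K, p < N + Lmax) (((Cshift N Lmax (L k))^T *m s) p ord0).

Definition Zmat (Q N Lmax K : nat) (T : R) (f : 'I_K -> R) (beta : 'I_K -> C)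
  (L : 'I_K -> nat) (s : 'cV[C]_N) : 'M[C]_(Q, N + Lmax) :=
  Dmat Q T f *m Lmat beta *m Gmat Lmax L s.

(* g(x) : distance of x to the nearest integer, as defined in the paper *)
Definition gdist (x : R) : R :=
  if (Num.ceil x)%:~R - x <= 1 / 2 then (Num.ceil x)%:~R - x
  else x - (Num.floor x)%:~R.

(* xi_t = min_{i <> j} g(T |f_i - f_j|); (the value 1/2 is the neutral element,
   harmless since g <= 1/2; it is the value used when K = 1) *)
Definition xi_t K (T : R) (f : 'I_K -> R) : R :=
  \big[Num.min/(1 / 2)]_(i < K)
    \big[Num.min/(1 / 2)]_(j < K | i != j) gdist (T * `|f i - f j|).

Definition betaQ (Q : nat) (xi : R) : R :=
  sup [set (sin (pi * Q%:R * x) ^+ 2 / sin (pi * x) ^+ 2) | x in `[xi, 1 / 2]%classic].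

(* gamma(l) = sum_{k} s(k) s^*(k - l), over indices in range (0-based here) *)
Definition gammaS N (s : 'cV[C]_N) (l : int) : C :=
  \sum_(k < N) \sum_(k' < N | (k%:Z - k'%:Z == l)) s k ord0 * cconj (s k' ord0).

Definition coherence (n K r : nat) (W : 'M[C]_(n, r)) : R :=
  n%:R / K%:R * \big[Num.max/0]_(i < n) \sum_(c < r) cabs (W i c) ^+ 2.

Definition compact_svd m n r (Z : 'M[C]_(m, n)) (U : 'M[C]_(m, r))
  (rho : 'I_r -> R) (V : 'M[C]_(n, r)) : Prop :=
  [/\ mxH U *m U = 1%:M, mxH V *m V = 1%:M, (forall c, 0 < rho c) &
      Z = U *m diag_mx (\row_c Complex (rho c) 0) *m mxH V].

End Defs.

(* Main.v *)
Require Import Defs.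
From HB Require Import structures.
From mathcomp Require Import all_boot all_order all_algebra.
From mathcomp Require Import all_classical all_reals all_analysis.
From mathcomp Require Import complex.
From mathcomp Require Import ring lra zify.
Import Order.TTheory GRing.Theory Num.Theory.
Local Open Scope ring_scope.
Local Open Scope complex_scope.
Set Implicit Arguments. Unset Strict Implicit. Unset Printing Implicit Defensive.


Section H.
Variable R : realType.
Local Notation C := R[i].

Lemma cabs_ge0 (z : C) : 0 <= cabs z.
Proof. by case: z => a b; rewrite /cabs /= sqrtr_ge0. Qed.
Lemma cabsM (x y : C) : cabs (x * y) = cabs x * cabs y.
Proof. exact: Normc.normcM. Qed.
Lemma cabsD (x y : C) : cabs (x + y) <= cabs x + cabs y.
Proof. exact: (@le_normcD R x y). Qed.
Lemma cabs_conj (z : C) : cabs (cconj z) = cabs z.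
Proof. by case: z => a b; rewrite /cabs /cconj /= sqrrN. Qed.
Lemma cabs_real (r : R) : cabs (r%:C) = `|r|.
Proof. by rewrite /cabs /= expr0n /= addr0 sqrtr_sqr. Qed.
Lemma mulcJ (z : C) : z * cconj z = (cabs z ^+ 2)%:C.
Proof.
case: z => a b; rewrite /cabs /cconj /= sqr_sqrtr ?addr_ge0 ?sqr_ge0 //.
by apply/eqP; rewrite eq_complex /=; apply/andP; split; apply/eqP; ring.
Qed.
Lemma cabs_expj (t : R) : cabs (expj t) = 1.
Proof. by rewrite /cabs /expj /= cos2Dsin2 sqrtr1. Qed.
Lemma cabs_sum (I : finType) (P : pred I) (F : I -> C) :
  cabs (\sum_(i | P i) F i) <= \sum_(i | P i) cabs (F i).
Proof.
elim/big_ind2: _ => //.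
  by rewrite /cabs /= expr0n /= addr0 sqrtr0.
move=> x1 y1 x2 y2 h1 h2; apply: le_trans (cabsD _ _) _; exact: lerD.
Qed.
Lemma cabs_eq0 (z : C) : cabs z = 0 -> z = 0.
Proof. exact: Normc.eq0_normc. Qed.
End H.

Section H2.
Variable R : realType.
Local Notation C := R[i].

Lemma cs_sum (I : finType) (P : pred I) (a b : I -> R) :
  (\sum_(i | P i) a i * b i) ^+ 2 <=
  (\sum_(i | P i) a i ^+ 2) * (\sum_(i | P i) b i ^+ 2).
Proof.
set A := \sum_(i | P i) a i ^+ 2; set B := \sum_(i | P i) b i ^+ 2.
set S := \sum_(i | P i) a i * b i.
have H : 0 <= \sum_(i | P i) \sum_(j | P j) (a i * b j - a j * b i) ^+ 2.
  by apply: sumr_ge0 => i _; apply: sumr_ge0 => j _; exact: sqr_ge0.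
have e1 : \sum_(i | P i) \sum_(j | P j) (a i ^+ 2 * b j ^+ 2) = A * B.
  by rewrite /A /B mulr_suml; apply: eq_bigr => i _; rewrite mulr_sumr.
have e2 : \sum_(i | P i) \sum_(j | P j) (a j ^+ 2 * b i ^+ 2) = A * B.
  rewrite exchange_big /=; exact: e1.
have e3 : \sum_(i | P i) \sum_(j | P j) ((a i * b i) * (a j * b j)) = S * S.
  by rewrite /S mulr_suml; apply: eq_bigr => i _; rewrite mulr_sumr.
have E : \sum_(i | P i) \sum_(j | P j) (a i * b j - a j * b i) ^+ 2 =
   \sum_(i | P i) \sum_(j | P j) (a i ^+ 2 * b j ^+ 2) +
   \sum_(i | P i) \sum_(j | P j) (a j ^+ 2 * b i ^+ 2) -
   2 * \sum_(i | P i) \sum_(j | P j) ((a i * b i) * (a j * b j)).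
  rewrite mulr_sumr -big_split -sumrB /=; apply: eq_bigr => i _.
  rewrite mulr_sumr -big_split -sumrB /=; apply: eq_bigr => j _; ring.
rewrite E e1 e2 e3 in H; rewrite expr2; lra.
Qed.

Definition sqn m (v : 'cV[C]_m) : R := \sum_j cabs (v j 0) ^+ 2.
Definition rowsq m n (W : 'M[C]_(m, n)) (i : 'I_m) : R := \sum_c cabs (W i c) ^+ 2.

Lemma sqn_ge0 m (v : 'cV[C]_m) : 0 <= sqn v.
Proof. by apply: sumr_ge0 => j _; exact: sqr_ge0. Qed.
Lemma rowsq_ge0 m n (W : 'M[C]_(m, n)) i : 0 <= rowsq W i.
Proof. by apply: sumr_ge0 => j _; exact: sqr_ge0. Qed.

Lemma cconjM (x y : C) : cconj (x * y) = cconj x * cconj y.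
Proof. exact: rmorphM. Qed.
Lemma cconj_sum (I : finType) (P : pred I) (F : I -> C) :
  cconj (\sum_(i | P i) F i) = \sum_(i | P i) cconj (F i).
Proof. exact: rmorph_sum. Qed.
Lemma cconjK (x : C) : cconj (cconj x) = x.
Proof. exact: conjcK. Qed.
Lemma real_sum (I : finType) (P : pred I) (F : I -> R) :
  (\sum_(i | P i) F i)%:C = \sum_(i | P i) (F i)%:C :> C.
Proof. exact: rmorph_sum. Qed.

Lemma mxH_mul m n p (A : 'M[C]_(m, n)) (B : 'M[C]_(n, p)) :
  mxH (A *m B) = mxH B *m mxH A.
Proof.
apply/matrixP => i j; rewrite !mxE cconj_sum; apply: eq_bigr => k _.
by rewrite !mxE cconjM mulrC.
Qed.
Lemma mxHK m n (A : 'M[C]_(m, n)) : mxH (mxH A) = A.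
Proof. by apply/matrixP => i j; rewrite !mxE cconjK. Qed.

Lemma mxH_vv m (v : 'cV[C]_m) : (mxH v *m v) 0 0 = (sqn v)%:C.
Proof.
rewrite !mxE /sqn real_sum; apply: eq_bigr => j _.
by rewrite !mxE mulrC mulcJ.
Qed.
End H2.

Section H3.
Variable R : realType.
Local Notation C := R[i].

Lemma cabs_dot n (a : 'I_n -> C) (x : 'I_n -> C) :
  cabs (\sum_k a k * x k) ^+ 2 <= (\sum_k cabs (a k) ^+ 2) * (\sum_k cabs (x k) ^+ 2).
Proof.
have := @cs_sum R _ xpredT (fun k => cabs (a k)) (fun k => cabs (x k)). move=> H. apply: le_trans H.
rewrite ler_sqr ?nnegrE ?cabs_ge0 //; last by apply: sumr_ge0 => k _; rewrite mulr_ge0 ?cabs_ge0.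
by apply: le_trans (cabs_sum _ _) _; apply: ler_sum => k _; rewrite cabsM.
Qed.

Lemma row_bound n K r (W : 'M[C]_(n, r)) (A : 'M[C]_(n, K)) (X : 'M[C]_(K, r)) (c : R) :
  mxH W *m W = 1%:M -> W = A *m X -> 0 < c ->
  (forall x : 'cV[C]_K, c * sqn x <= sqn (A *m x)) ->
  forall i, rowsq W i <= rowsq A i / c.
Proof.
move=> WW WAX c0 Hc i.
set t := rowsq W i.
pose y : 'cV[C]_r := mxH (row i W).
pose u := W *m y. pose x := X *m y.
have uAx : u = A *m x by rewrite /u /x WAX mulmxA.
have ui : u i 0 = t%:C.
  rewrite /u mxE /t /rowsq real_sum; apply: eq_bigr => k _.
  by rewrite !mxE mulcJ.
have sy : sqn y = t.
  by rewrite /sqn /t /rowsq; apply: eq_bigr => k _; rewrite !mxE cabs_conj.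
have su : sqn u = t.
  apply: complexI; rewrite -mxH_vv /u mxH_mul mulmxA -(mulmxA (mxH y)) WW mulmx1.
  by rewrite mxH_vv sy.
have t0 : 0 <= t by exact: rowsq_ge0.
have cs : t ^+ 2 <= rowsq A i * sqn x.
  have -> : t ^+ 2 = cabs (u i 0) ^+ 2 by rewrite ui cabs_real ger0_norm.
  rewrite uAx mxE; exact: (cabs_dot (fun k => A i k) (fun k => x k 0)).
have cx : c * sqn x <= t by rewrite -su uAx; exact: Hc.
have rA0 : 0 <= rowsq A i by exact: rowsq_ge0.
have h : c * t ^+ 2 <= rowsq A i * t.
  have h1 := ler_wpM2l (ltW c0) cs.
  have h2 := ler_wpM2l rA0 cx. lra.
have [->|tn0] := eqVneq t 0; first by rewrite divr_ge0 // ltW.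
have tp : 0 < t by rewrite lt_def tn0 t0.
rewrite ler_pdivlMr //; rewrite expr2 mulrA in h.
by rewrite mulrC -(ler_pM2r tp).
Qed.

Lemma gram_lb n K (A : 'M[C]_(n, K)) (M : R) (b : 'I_K -> 'I_K -> R) :
  (forall k, (mxH A *m A) k k = M%:C) ->
  (forall k l, l != k -> cabs ((mxH A *m A) k l) <= b k l) ->
  forall x : 'cV[C]_K,
    M * sqn x - \sum_k \sum_(l | l != k) cabs (x k 0) * b k l * cabs (x l 0)
    <= sqn (A *m x).
Proof.
move=> Hd Ho x; set G := mxH A *m A.
have E : (sqn (A *m x))%:C = \sum_k \sum_l cconj (x k 0) * G k l * x l 0.
  rewrite -mxH_vv mxH_mul mulmxA -(mulmxA (mxH x)) -/G mxE.
  rewrite exchange_big /=; apply: eq_bigr => l _; rewrite mxE mulr_suml.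
  by apply: eq_bigr => k _; rewrite !mxE.
set O := \sum_k \sum_(l | l != k) cconj (x k 0) * G k l * x l 0.
have E2 : (sqn (A *m x))%:C = (M * sqn x)%:C + O.
  rewrite E /O /sqn mulr_sumr real_sum -big_split /=; apply: eq_bigr => k _.
  rewrite (bigD1 k) //= Hd; congr (_ + _).
  by rewrite rmorphM /= -mulcJ; ring.
have HO : cabs O <= \sum_k \sum_(l | l != k) cabs (x k 0) * b k l * cabs (x l 0).
  apply: le_trans (cabs_sum _ _) _; apply: ler_sum => k1 _.
  apply: le_trans (cabs_sum _ _) _; apply: ler_sum => l1 lk.
  rewrite !cabsM cabs_conj ler_wpM2r ?cabs_ge0 // ler_wpM2l ?cabs_ge0 //.
  exact: Ho.
have : O = (sqn (A *m x) - M * sqn x)%:C by rewrite rmorphB /= E2 addrC addKr.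
move=> EO; rewrite EO cabs_real in HO.
move: HO; rewrite ler_norml => /andP[h _]; lra.
Qed.
End H3.

Section H4.
Variable R : realType.
Local Notation C := R[i].

Lemma sum_neq_const K (k : 'I_K) (c : R) : \sum_(l | l != k) c = c * K%:R - c.
Proof.
have := sumr_const (@predT 'I_K) c; rewrite (bigD1 k) //= card_ord => h.
rewrite -mulr_natr in h; rewrite -h [c + _]addrC addrK.
by apply: eq_bigl => l.
Qed.

Lemma sum_neq K (k : 'I_K) (F : 'I_K -> R) : \sum_(l | l != k) F l = \sum_l F l - F k.
Proof. by rewrite [X in _ = X - _](bigD1 k) //= [F k + _]addrC addrK. Qed.

Lemma off_unif K (x : 'cV[C]_K) (bb : R) : 0 <= bb ->
  \sum_k \sum_(l | l != k) cabs (x k 0) * bb * cabs (x l 0) <= bb * (K%:R - 1) * sqn x.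
Proof.
move=> b0; set a := fun k => cabs (x k 0).
have step : \sum_k \sum_(l | l != k) a k * bb * a l <=
    \sum_k \sum_(l | l != k) (bb / 2 * a k ^+ 2 + bb / 2 * a l ^+ 2).
  apply: ler_sum => k _; apply: ler_sum => l _.
  have : 0 <= bb * (a k - a l) ^+ 2 by rewrite mulr_ge0 ?sqr_ge0.
  move=> h; nra.
apply: le_trans step _; rewrite le_eqVlt; apply/orP; left; apply/eqP.
set S := sqn x.
set p := bb / 2.
have hS : \sum_l (p * a l ^+ 2) = p * S by rewrite -mulr_sumr.
transitivity (\sum_(k < K) ((p * K%:R - p * 2) * a k ^+ 2 + p * S)).
  apply: eq_bigr => k _; rewrite big_split /= sum_neq_const sum_neq hS; ring.
rewrite big_split /= -mulr_sumr sumr_const card_ord -mulr_natr.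
have -> : bb = p * 2 by rewrite /p divfK // pnatr_eq0.
rewrite /S /sqn; ring.
Qed.

Lemma off_cs K (x : 'cV[C]_K) (b : 'I_K -> 'I_K -> R) : (forall k l, 0 <= b k l) ->
  \sum_k \sum_(l | l != k) cabs (x k 0) * b k l * cabs (x l 0) <=
  Num.sqrt (\sum_k \sum_(l | l != k) b k l ^+ 2) * sqn x.
Proof.
move=> b0; set a := fun k => cabs (x k 0).
have a0 : forall k, 0 <= a k by move=> k; exact: cabs_ge0.
set B2 := \sum_k \sum_(l | l != k) b k l ^+ 2.
have B20 : 0 <= B2 by apply: sumr_ge0 => k _; apply: sumr_ge0 => l _; exact: sqr_ge0.
have L0 : 0 <= \sum_k \sum_(l | l != k) a k * b k l * a l.
  by apply: sumr_ge0 => k _; apply: sumr_ge0 => l _; rewrite !mulr_ge0.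
rewrite -(ler_sqr (x:=_) (y:=_)) ?nnegrE // ?mulr_ge0 ?sqrtr_ge0 ?sqn_ge0 //.
rewrite exprMn sqr_sqrtr //.
rewrite /B2 !(pair_big_dep xpredT (fun k l => l != k)) /=.
have := cs_sum (fun p : 'I_K * 'I_K => p.2 != p.1) (fun p => a p.1 * a p.2) (fun p => b p.1 p.2).
have -> : \sum_(p | p.2 != p.1) a p.1 * a p.2 * b p.1 p.2 = \sum_(p | p.2 != p.1) a p.1 * b p.1 p.2 * a p.2.
  by apply: eq_bigr => p _; ring.
move=> h; apply: le_trans h _; rewrite mulrC; apply: ler_wpM2l.
  by apply: sumr_ge0 => p _; exact: sqr_ge0.
apply: le_trans (_ : \sum_p (a p.1 * a p.2) ^+ 2 <= _).
  rewrite [X in _ <= X](bigID (fun p : 'I_K * 'I_K => p.2 != p.1)) /= lerDl.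
  by apply: sumr_ge0 => p _; exact: sqr_ge0.
rewrite -(pair_big xpredT xpredT (fun k l => (a k * a l) ^+ 2)) /= expr2 /sqn mulr_suml.
rewrite le_eqVlt; apply/orP; left; apply/eqP; apply: eq_bigr => i _; rewrite mulr_sumr; apply: eq_bigr => j _; rewrite exprMn. done. Qed.

End H4.

Section H5.
Variable R : realType.
Local Notation C := R[i].

Definition Sg (n : nat) (y : R) : C := \sum_(q < n) expj (2 * pi * y * q%:R).
Definition ratQ (n : nat) (x : R) : R := sin (pi * n%:R * x) ^+ 2 / sin (pi * x) ^+ 2.

Lemma expjMr (t r : R) : expj t * r%:C = Complex (cos t * r) (sin t * r).
Proof. by apply/eqP; rewrite eq_complex /=; apply/andP; split; apply/eqP; ring. Qed.

Lemma Sg_id n y : Sg n y * (sin (pi * y))%:C =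
  expj ((n%:R - 1) * (pi * y)) * (sin (n%:R * (pi * y)))%:C.
Proof.
elim: n => [|n IH].
  by rewrite /Sg big_ord0 mul0r mul0r sin0 rmorph0 mulr0.
rewrite /Sg big_ord_recr /= mulrDl -/(Sg n y) IH !expjMr.
set a := pi * y; set u := n%:R * a.
have e1 : (n%:R - 1) * a = u - a by rewrite /u; ring.
have e2 : 2 * pi * y * (@Ordinal n.+1 n (ltnSn n))%:R = u + u by rewrite /= /u /a; ring.
have e3 : n.+1%:R * a = u + a by rewrite /u -addn1 natrD; ring.
have e4 : (n.+1%:R - 1) * a = u by rewrite /u -addn1 natrD; ring.
rewrite e1 e2 e3 e4 /=.
apply/eqP; rewrite eq_complex /=; apply/andP; split; apply/eqP;
  rewrite ?cosB ?sinB ?cosD ?sinD; ring.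
Qed.

Lemma Sg_norm n y : cabs (Sg n y) ^+ 2 * sin (pi * y) ^+ 2 = sin (pi * n%:R * y) ^+ 2.
Proof.
have : cabs (Sg n y * (sin (pi * y))%:C) ^+ 2 =
  cabs (expj ((n%:R - 1) * (pi * y)) * (sin (n%:R * (pi * y)))%:C) ^+ 2 by rewrite Sg_id.
rewrite !cabsM cabs_expj mul1r !cabs_real !exprMn !real_normK ?num_real //.
by move=> ->; rewrite mulrA (mulrC _ pi).
Qed.

Lemma Sg_le n y : cabs (Sg n y) <= n%:R.
Proof.
apply: le_trans (cabs_sum _ _) _.
under eq_bigr do rewrite cabs_expj.
by rewrite sumr_const card_ord.
Qed.

Lemma rat_Sg n y : sin (pi * y) != 0 -> ratQ n y = cabs (Sg n y) ^+ 2.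
Proof. by move=> h; rewrite /ratQ -Sg_norm mulfK // sqrf_eq0. Qed.

Lemma rat_le n y : ratQ n y <= n%:R ^+ 2.
Proof.
have [h|h] := eqVneq (sin (pi * y)) 0.
  by rewrite /ratQ h expr0n /= invr0 mulr0 sqr_ge0.
rewrite rat_Sg // ler_sqr ?nnegrE ?cabs_ge0 ?ler0n //; exact: Sg_le.
Qed.

Lemma rat_ge0 n y : 0 <= ratQ n y.
Proof. by rewrite /ratQ divr_ge0 ?sqr_ge0. Qed.

Lemma sin2_nat (a : R) (m : nat) : sin (a + pi *+ m) ^+ 2 = sin a ^+ 2.
Proof.
rewrite alternatingn; last exact: sinDpi.
by rewrite exprMn -exprM mulnC exprM sqrrN !expr1n mul1r.
Qed.

Lemma sin2_shift (a : R) (m : int) : sin (a + pi * m%:~R) ^+ 2 = sin a ^+ 2.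
Proof.
case: m => m.
  by have -> : ((Posz m)%:~R : R) = m%:R by []; rewrite mulr_natr sin2_nat.
have -> : (Negz m)%:~R = - (m.+1)%:R :> R by rewrite NegzE mulrNz.
rewrite -(sin2_nat (a + pi * - (m.+1)%:R) m.+1); congr (sin _ ^+ 2).
by rewrite mulrN mulr_natr addrNK.
Qed.
Lemma rat_shift n x (m : int) : ratQ n (x + m%:~R) = ratQ n x.
Proof.
rewrite /ratQ.
have -> : pi * n%:R * (x + m%:~R) = pi * n%:R * x + pi * (n%:Z * m)%:~R.
  by rewrite intrM /=; ring.
by rewrite mulrDr !sin2_shift.
Qed.

Lemma rat_neg n x : ratQ n (- x) = ratQ n x.
Proof. by rewrite /ratQ !mulrN !sinN !sqrrN. Qed.
End H5.

Section H6.
Variable R : realType.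
Local Notation C := R[i].

Lemma gdist_inv (h : R -> R) : (forall x (m : int), h (x + m%:~R) = h x) ->
  (forall x, h (- x) = h x) -> forall z, h (gdist z) = h z.
Proof.
move=> hs hn z; rewrite /gdist; case: ifP => _.
  by rewrite addrC hs hn.
by rewrite -[z - _]addrC -intrN addrC hs.
Qed.

Lemma gdist_ge0 (z : R) : 0 <= gdist z.
Proof.
rewrite /gdist; case: ifP => _; first by rewrite subr_ge0 Num.Theory.ceil_ge.
by rewrite subr_ge0 Num.Theory.floor_le.
Qed.

Lemma gdist_le (z : R) : gdist z <= 1 / 2.
Proof.
rewrite /gdist; case: ifP => // /negbT; rewrite -ltNge => h.
have : (Num.ceil z)%:~R <= (Num.floor z)%:~R + 1 :> R.
  rewrite Num.Theory.ceil_floor intrD lerD2l.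
  by case: (z \isn't a Num.int).
lra.
Qed.

Lemma xi_le K (T : R) (f : 'I_K -> R) k l : k != l -> xi_t T f <= gdist (T * `|f k - f l|).
Proof.
move=> kl; rewrite /xi_t.
apply: le_trans (bigmin_le _ k _) _.
apply: bigmin_le_cond. exact kl.
Qed.

Lemma xi_le_half K (T : R) (f : 'I_K -> R) : xi_t T f <= 1 / 2.
Proof. exact: bigmin_le_id. Qed.

Lemma betaQ_ge n (xi x : R) : xi <= x -> x <= 1 / 2 -> ratQ n x <= betaQ n xi.
Proof.
move=> h1 h2; apply: sup_upper_bound.
  split; first by exists (ratQ n x), x => //=; rewrite in_itv /= h1 h2.
  by exists (n%:R ^+ 2) => _ [y _ <-]; exact: rat_le.
by exists x => //=; rewrite in_itv /= h1 h2.
Qed.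
End H6.

Section H7.
Variable R : realType.
Local Notation C := R[i].

Lemma Re_sum n (F : 'I_n -> C) : complex.Re (\sum_i F i) = \sum_i complex.Re (F i).
Proof.
elim/big_ind2: _ => //; last by move=> x1 [a b] y1 [c d] /= <- <-.
Qed.

Lemma cabs2_Re (z : C) : complex.Re z ^+ 2 <= cabs z ^+ 2.
Proof.
case: z => a b; rewrite /cabs /= sqr_sqrtr ?addr_ge0 ?sqr_ge0 //.
by rewrite lerDl sqr_ge0.
Qed.

Lemma cos_pi4_sq : cos (pi / 4) ^+ 2 = 1 / 2 :> R.
Proof.
have := cos_mulr2n (pi / 4 : R).
have -> : (pi / 4 : R) *+ 2 = pi / 2 by rewrite -mulr_natr; field.
rewrite cos_pihalf => h.
have : cos (pi / 4) ^+ 2 * 2 = 1 :> R by rewrite mulr_natr; lra.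
move=> h2; lra.
Qed.

Lemma cos_ge_pi4 (t : R) : 0 <= t -> t <= pi / 4 -> cos (pi / 4) <= cos t.
Proof.
move=> t0 t4; have p0 := pi_gt0 R.
rewrite le_eqVlt; case: (eqVneq t (pi / 4)) => [->|ne]; first by rewrite eqxx.
apply/orP; right; rewrite ltr_cos ?in_itv /= ?t0 //.
- by rewrite lt_def eq_sym ne t4.
- apply/andP; split; lra.
- apply/andP; split; lra.
Qed.

Lemma rat_big n : (0 < n)%N -> n%:R ^+ 2 / 2 <= ratQ n (1 / (8 * n%:R) : R).
Proof.
move=> n0; have p0 := pi_gt0 R; have pl := pihalf_lt2 R.
have nr : (0 : R) < n%:R by rewrite ltr0n.
set x0 := 1 / (8 * n%:R).
have x0p : 0 < x0 by rewrite /x0 divr_gt0 // mulr_gt0.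
have x0le : x0 * n%:R = 1 / 8 by rewrite /x0; field; rewrite pnatr_eq0 -lt0n.
have sn : sin (pi * x0) != 0.
  rewrite gt_eqF // sin_gt0_pi //; apply/andP; split; first by rewrite mulr_gt0.
  have : x0 <= 1 / 8.
    have n1 : (1 : R) <= n%:R by rewrite ler1n. nra.
  move=> h; nra.
rewrite rat_Sg //.
apply: le_trans (cabs2_Re _).
have c0 : 0 <= cos (pi / 4) :> R by apply: cos_ge0_pihalf; apply/andP; split; lra.
have hRe : n%:R * cos (pi / 4) <= complex.Re (Sg n x0).
  rewrite /Sg Re_sum.
  have -> : n%:R * cos (pi / 4) = \sum_(q < n) cos (pi / 4) :> R.
    by rewrite mulr_natl -[in LHS](card_ord n) -sumr_const; apply: eq_bigl.
  apply: ler_sum => q _.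
  have qn : (q%:R : R) <= n%:R by rewrite ler_nat ltnW.
  have q0 : (0 : R) <= q%:R by rewrite ler0n.
  have hq : x0 * q%:R <= 1 / 8 by rewrite -x0le ler_wpM2l // ltW.
  have hq0 : 0 <= x0 * q%:R by rewrite mulr_ge0 // ltW.
  apply: cos_ge_pi4; rewrite -(mulrA _ x0).
    by rewrite !mulr_ge0 // ?ltW.
  nra.
have : (n%:R * cos (pi / 4)) ^+ 2 <= complex.Re (Sg n x0) ^+ 2.
  by rewrite ler_sqr ?nnegrE ?mulr_ge0 ?ler0n //; apply: le_trans hRe; rewrite mulr_ge0 ?ler0n.
rewrite exprMn cos_pi4_sq => h; lra.
Qed.
End H7.

Section H8.
Variable R : realType.
Local Notation C := R[i].

Lemma two_le_K K (k l : 'I_K) : k != l -> (1 < K)%N.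
Proof.
move: (ltn_ord k) (ltn_ord l); rewrite -val_eqE /=.
move: (nat_of_ord k) (nat_of_ord l) => a b ha hb /eqP hab; lia.
Qed.

Lemma Sg_bound Q K (T : R) (f : 'I_K -> R) (k l : 'I_K) : (0 < Q)%N -> k != l ->
  K%:R * Num.sqrt (betaQ Q (xi_t T f)) <= Q%:R ->
  cabs (Sg Q ((f l - f k) * T)) ^+ 2 <= betaQ Q (xi_t T f).
Proof.
move=> Q0 kl hK.
set bQ := betaQ Q (xi_t T f).
set y := (f l - f k) * T.
set x := gdist (T * `|f k - f l|).
have hzy : forall h : R -> R, (forall t (m : int), h (t + m%:~R) = h t) ->
    (forall t, h (- t) = h t) -> h x = h y.
  move=> h hs hn; rewrite /x gdist_inv // /y.
  have [d0|d0] := leP 0 (f k - f l).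
    by rewrite ger0_norm // -hn; congr h; ring.
  by rewrite ltr0_norm //; congr h; ring.
have rxy : ratQ Q x = ratQ Q y by apply: hzy; [exact: rat_shift | exact: rat_neg].
have sxy : sin (pi * x) ^+ 2 = sin (pi * y) ^+ 2.
  apply: (hzy (fun t => sin (pi * t) ^+ 2)).
    by move=> t m; rewrite mulrDr sin2_shift.
  by move=> t; rewrite mulrN sinN sqrrN.
have x0 : 0 <= x := gdist_ge0 _.
have x2 : x <= 1 / 2 := gdist_le _.
have xix : xi_t T f <= x := xi_le T f kl.
have [sx|sx] := eqVneq (sin (pi * x)) 0; last first.
  have sy : sin (pi * y) != 0.
    by apply: contra sx => /eqP sy; rewrite -sqrf_eq0 sxy sy expr0n.
  by rewrite -rat_Sg // -rxy; exact: betaQ_ge.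
exfalso.
have xe : x = 0.
  apply/eqP; rewrite eq_le x0 andbT; apply/negP => /negP; rewrite -ltNge => xp.
  have p0 := pi_gt0 R.
  have : 0 < sin (pi * x).
    by apply: sin_gt0_pi; apply/andP; split; [rewrite mulr_gt0 | nra].
  by rewrite sx ltxx.
have Qr : (0 : R) < Q%:R by rewrite ltr0n.
have b0 : Q%:R ^+ 2 / 2 <= bQ.
  apply: le_trans (rat_big R Q0) _; apply: betaQ_ge.
    by rewrite xe in xix; apply: le_trans xix _; rewrite divr_ge0 // mulr_ge0 // ltW.
  rewrite ler_pdivrMr ?mulr_gt0 //.
  have -> : 1 / 2 * (8 * Q%:R) = 4 * Q%:R :> R by field.
  have : (1 : R) <= Q%:R by rewrite ler1n.
  lra.
have K2 : (2 : R) <= K%:R by rewrite ler_nat; exact: two_le_K kl.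
have bp : 0 <= bQ by apply: le_trans b0; rewrite divr_ge0 ?sqr_ge0.
have ss := sqr_sqrtr bp.
have s0 := sqrtr_ge0 bQ.
set s := Num.sqrt bQ in ss s0 hK.
have h1 : 2 * s <= Q%:R by nra.
nra.
Qed.
End H8.

Section H9.
Variable R : realType.
Local Notation C := R[i].

Definition Sdiag r (rho : 'I_r -> R) : 'M[C]_r := diag_mx (\row_c Complex (rho c) 0).
Definition Sinv r (rho : 'I_r -> R) : 'M[C]_r := diag_mx (\row_c Complex (rho c)^-1 0).

Lemma SdSi r (rho : 'I_r -> R) : (forall c, 0 < rho c) -> Sdiag rho *m Sinv rho = 1%:M.
Proof.
move=> hp; rewrite /Sdiag /Sinv mulmx_diag; apply/matrixP => i j; rewrite !mxE.
case: (eqVneq i j) => [->|ne]; last by rewrite /= !mulr0n.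
rewrite /= !mulr1n.
have -> : Complex (rho j) 0 * Complex (rho j)^-1 0 = ((rho j) * (rho j)^-1)%:C by rewrite rmorphM.
by rewrite mulfV ?gt_eqF.
Qed.

Lemma mxH_Sd r (rho : 'I_r -> R) : mxH (Sdiag rho) = Sdiag rho.
Proof.
apply/matrixP => i j; rewrite !mxE.
have [->|ne] := eqVneq i j.
  by rewrite !mulr1n /cconj /= oppr0.
by rewrite !mulr0n /cconj rmorph0.
Qed.

Lemma svd_U m n r (Z : 'M[C]_(m, n)) (U : 'M[C]_(m, r)) (rho : 'I_r -> R) (V : 'M[C]_(n, r)) :
  compact_svd Z U rho V -> U = Z *m V *m Sinv rho.
Proof.
case=> UU VV rp ZE; rewrite ZE -/(Sdiag rho) -!mulmxA (mulmxA (mxH V)) VV mul1mx.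
by rewrite SdSi // mulmx1.
Qed.

Lemma svd_V m n r (Z : 'M[C]_(m, n)) (U : 'M[C]_(m, r)) (rho : 'I_r -> R) (V : 'M[C]_(n, r)) :
  compact_svd Z U rho V -> V = mxH Z *m U *m Sinv rho.
Proof.
case=> UU VV rp ZE; rewrite ZE -/(Sdiag rho) !mxH_mul mxHK mxH_Sd.
by rewrite -!mulmxA (mulmxA (mxH U)) UU mul1mx SdSi // mulmx1.
Qed.

Lemma expj_conjM (a b : R) : cconj (expj a) * expj b = expj (b - a).
Proof.
rewrite /expj /cconj /= cosB sinB.
by apply/eqP; rewrite eq_complex /=; apply/andP; split; apply/eqP; ring.
Qed.

Lemma expj0 : expj 0 = 1 :> C.
Proof. by rewrite /expj cos0 sin0. Qed.

Lemma Dgram Q K (T : R) (f : 'I_K -> R) k l :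
  (mxH (Dmat Q T f) *m Dmat Q T f) k l = Sg Q ((f l - f k) * T).
Proof.
rewrite mxE /Sg; apply: eq_bigr => q _; rewrite !mxE expj_conjM.
congr expj; ring.
Qed.

Lemma Dgram_diag Q K (T : R) (f : 'I_K -> R) k :
  (mxH (Dmat Q T f) *m Dmat Q T f) k k = (Q%:R)%:C.
Proof.
rewrite Dgram subrr mul0r /Sg.
under eq_bigr do rewrite mulr0 mul0r expj0.
by rewrite sumr_const card_ord rmorph_nat.
Qed.

Lemma Drow Q K (T : R) (f : 'I_K -> R) q : rowsq (Dmat Q T f) q = K%:R.
Proof.
rewrite /rowsq; under eq_bigr do rewrite mxE cabs_expj expr1n.
by rewrite sumr_const card_ord.
Qed.
End H9.

Section H10.
Variable R : realType.
Local Notation C := R[i].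

Lemma Gent N Lmax K (L : 'I_K -> nat) (s : 'cV[C]_N) k p :
  Gmat Lmax L s k p = \sum_(i < N) ((nat_of_ord p == i + L k)%N)%:R * s i 0.
Proof. by rewrite !mxE; apply: eq_bigr => i _; rewrite !mxE. Qed.

Lemma delta_sum n a (h : (a < n)%N) (F : 'I_n -> C) :
  \sum_(p < n) ((p == a :> nat))%:R * F p = F (Ordinal h).
Proof.
rewrite (bigD1 (Ordinal h)) //= eqxx mul1r big1 ?addr0 // => p hp.
suff -> : (p == a :> nat) = false by rewrite mul0r.
apply/negbTE; move: hp; apply: contra => /eqP e; apply/eqP/val_inj; exact: e.
Qed.

Lemma Ggram N Lmax K (L : 'I_K -> nat) (s : 'cV[C]_N) :
  (forall k, (L k <= Lmax)%N) -> forall k l,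
  (Gmat Lmax L s *m mxH (Gmat Lmax L s)) k l =
  \sum_(i < N) \sum_(j < N) ((i + L k == j + L l)%N)%:R * (s i 0 * cconj (s j 0)).
Proof.
move=> hL k l; rewrite mxE.
under eq_bigr do rewrite [mxH _ _ _]mxE Gent mulr_suml.
rewrite exchange_big /=; apply: eq_bigr => i _.
have h : (i + L k < N + Lmax)%N by have := ltn_ord i; have := hL k; lia.
under eq_bigr do rewrite -mulrA.
under eq_bigr do rewrite [X in _ * (_ * X)]mxE.
rewrite (delta_sum h (fun p => s i 0 * cconj (Gmat Lmax L s l p))) Gent cconj_sum mulr_sumr.
apply: eq_bigr => j _; rewrite cconjM /cconj rmorph_nat /=.
by rewrite mulrCA; congr (_ * (_ * _)); rewrite eq_sym.
Qed.

Lemma Ggram_gamma N Lmax K (L : 'I_K -> nat) (s : 'cV[C]_N) :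
  (forall k, (L k <= Lmax)%N) -> forall k l,
  (Gmat Lmax L s *m mxH (Gmat Lmax L s)) k l = gammaS s ((L l)%:Z - (L k)%:Z).
Proof.
move=> hL k l; rewrite Ggram // /gammaS; apply: eq_bigr => i _.
rewrite [in RHS]big_mkcond /=; apply: eq_bigr => j _.
have -> : (i%:Z - j%:Z == (L l)%:Z - (L k)%:Z) = (i + L k == j + L l)%N.
  by apply/idP/idP => /eqP hh; apply/eqP; lia.
by case: (i + L k == j + L l)%N; rewrite ?mul1r ?mul0r.
Qed.

Lemma gamma0 N (s : 'cV[C]_N) : (forall n, cabs (s n 0) = 1) -> gammaS s 0 = (N%:R)%:C.
Proof.
move=> hs; rewrite /gammaS.
have -> : N%:R = \sum_(i < N) (1 : R) by rewrite sumr_const card_ord.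
rewrite real_sum; apply: eq_bigr => i _.
rewrite (eq_bigl (fun j => j == i)); last first.
  by move=> j; rewrite subr_eq0 eqz_nat eq_sym.
by rewrite big_pred1_eq mulcJ hs expr1n.
Qed.

Lemma Gent_le N Lmax K (L : 'I_K -> nat) (s : 'cV[C]_N) k p :
  (forall n, cabs (s n 0) = 1) -> cabs (Gmat Lmax L s k p) <= 1.
Proof.
move=> hs; rewrite Gent.
have [i0 /eqP hi|hn] := pickP (fun i : 'I_N => (nat_of_ord p == i + L k)%N).
  rewrite (bigD1 i0) //= hi eqxx mul1r big1 ?addr0 ?hs //.
  move=> i ne; suff -> : (i0 + L k == i + L k)%N = false by rewrite mul0r.
  apply/negbTE; move: ne; apply: contra => /eqP e; apply/eqP/val_inj => /=; lia.
rewrite big1 ?cabs_real ?normr0 // => i _.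
by move: (hn i) => /= ->; rewrite mul0r.
Qed.
End H10.

Section H11.
Variable R : realType.
Local Notation C := R[i].

Lemma coh_bound n K r (W : 'M[C]_(n, r)) (b : R) : 0 <= b ->
  (forall i, rowsq W i <= b) -> coherence K W <= n%:R / K%:R * b.
Proof.
move=> b0 hb; rewrite /coherence ler_wpM2l ?divr_ge0 ?ler0n //.
by apply: bigmax_le => // i _; exact: hb.
Qed.

Lemma coh_row n K r (W : 'M[C]_(n, r)) i : (0 < K)%N ->
  rowsq W i <= K%:R / n%:R * coherence K W.
Proof.
move=> K0; have n0 : (0 < n)%N by apply: leq_ltn_trans (leq0n i) (ltn_ord i).
have Kr : (0 : R) < K%:R by rewrite ltr0n.
have nr : (0 : R) < n%:R by rewrite ltr0n.
rewrite /coherence mulrA.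
have -> : K%:R / n%:R * (n%:R / K%:R) = 1 :> R.
  by field; rewrite (gt_eqF Kr) (gt_eqF nr).
rewrite mul1r; exact: (le_bigmax _ (fun i => \sum_c cabs (W i c) ^+ 2) i).
Qed.
End H11.


Unset Implicit Arguments.
Local Close Scope complex_scope.

Theorem theorem4 (R : realType) (Q N K Lmax : nat) (T : R)
  (s : 'cV[R[i]]_N) (L : 'I_K -> nat) (beta : 'I_K -> R[i]) (f : 'I_K -> R) :
  (0 < Q)%N -> (0 < N)%N -> (0 < K)%N -> 0 < T ->
  (forall n, cabs (s n ord0) = 1) ->
  (forall k, (L k <= Lmax)%N) ->
  injective f ->
  let bQ := betaQ Q (xi_t T f) in
  K%:R * Num.sqrt bQ <= Q%:R ->
  forall (r : nat) (U : 'M[R[i]]_(Q, r)) (rho : 'I_r -> R) (V : 'M[R[i]]_(N + Lmax, r)),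
    compact_svd (Zmat Q Lmax T f beta L s) U rho V ->
    let muU := coherence K U in
    let muV := coherence K V in
    let denV := N%:R - Num.sqrt (K%:R - 1) *
        Num.sqrt (\sum_(i < K) \sum_(j < K | j != i)
                   cabs (gammaS s ((L i)%:Z - (L j)%:Z)) ^+ 2) in
    let mu0 := Num.max muU muV in
    let mu1 := Num.sqrt K%:R * mu0 in
    [/\ muU <= Q%:R / (Q%:R - (K%:R - 1) * Num.sqrt bQ),
        (0 < denV -> muV <= (N + Lmax)%:R / denV),
        Num.max muU muV <= mu0 &
        forall (i : 'I_Q) (j : 'I_(N + Lmax)),
          cabs ((U *m mxH V) i j) <= mu1 * Num.sqrt (K%:R / (Q%:R * (N + Lmax)%:R))].
Proof.
move=> Q0 N0 K0 T0 hs hL _ bQ hK r U rho V svd muU muV denV mu0 mu1.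
have Qr : (0 : R) < Q%:R by rewrite ltr0n.
have Kr : (0 : R) < K%:R by rewrite ltr0n.
have n2r : (0 : R) < (N + Lmax)%:R by rewrite ltr0n addn_gt0 N0.
set D := Dmat Q T f; set Lm := Lmat beta; set G := Gmat Lmax L s.
have svd' := svd; case: svd' => UU VV _ _.
set s0 := Num.sqrt bQ in hK *.
have s00 : 0 <= s0 := sqrtr_ge0 _.
set c := Q%:R - (K%:R - 1) * s0.
have cpos : 0 < c.
  rewrite /c; have [->|sp] := eqVneq s0 0; first by rewrite mulr0 subr0.
  have : 0 < s0 by rewrite lt_def sp s00.
  nra.
have hU : forall i, rowsq U i <= K%:R / c.
  move=> i; rewrite -(Drow T f i).
  apply: (row_bound (X := Lm *m G *m V *m Sinv rho) UU) => //.
    by rewrite (svd_U svd) /Zmat -/D -/Lm -/G !mulmxA.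
  move=> x.
  have Ho : forall k l, l != k -> cabs ((mxH D *m D) k l) <= s0.
    move=> k l lk; rewrite Dgram.
    have kl : k != l by rewrite eq_sym.
    have h := Sg_bound Q0 kl hK.
    have b0 : 0 <= bQ by apply: le_trans h; exact: sqr_ge0.
    by rewrite -(ger0_norm (cabs_ge0 _)) -sqrtr_sqr /s0 ler_sqrt.
  have h1 := gram_lb (Dgram_diag Q T f) Ho x.
  have h2 := off_unif x s00.
  rewrite /c; lra.
have muUb : muU <= Q%:R / c.
  apply: le_trans (coh_bound _ _ hU) _; first by rewrite divr_ge0 ?ltW.
  rewrite le_eqVlt; apply/orP; left; apply/eqP; field.
  by rewrite (gt_eqF Kr) (gt_eqF cpos).
set B2 := \sum_k \sum_(l | l != k) cabs (gammaS s ((L l)%:Z - (L k)%:Z)) ^+ 2.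
have B20 : 0 <= B2 by apply: sumr_ge0 => k _; apply: sumr_ge0 => l _; exact: sqr_ge0.
have eB : B2 = \sum_(i < K) \sum_(j < K | j != i) cabs (gammaS s ((L i)%:Z - (L j)%:Z)) ^+ 2.
  rewrite /B2 (exchange_big_dep xpredT) //=; apply: eq_bigr => i _.
  by apply: eq_bigl => j; rewrite eq_sym.
have hden : denV <= N%:R - Num.sqrt B2.
  rewrite /denV -eB lerD2l lerN2.
  have sB := sqrtr_ge0 B2.
  case: (ltnP 1 K) => hK1.
    have : 1 <= Num.sqrt (K%:R - 1 : R).
      have : (2 : R) <= K%:R by rewrite ler_nat.
      move=> K2; rewrite -[X in X <= _]sqrtr1 ler_sqrt; lra.
    move=> h; nra.
  have -> : B2 = 0.
    apply: big1 => k _; apply: big1 => l lk.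
    by have := two_le_K lk; rewrite ltnNge hK1.
  by rewrite sqrtr0 mulr0.
have muVb : 0 < denV -> muV <= (N + Lmax)%:R / denV.
  move=> dpos.
  set c' := N%:R - Num.sqrt B2.
  have cpos' : 0 < c' by apply: lt_le_trans hden.
  have hV : forall p, rowsq V p <= K%:R / c'.
    move=> p.
    have hr : rowsq (mxH G) p <= K%:R.
      rewrite /rowsq.
      have -> : K%:R = \sum_(k < K) (1 : R) by rewrite sumr_const card_ord.
      apply: ler_sum => k _; have -> : mxH G p k = cconj (G k p) by rewrite !mxE.
      rewrite cabs_conj.
      have := @Gent_le R N Lmax K L s k p hs.
      move=> h; rewrite -(expr1n _ 2) ler_sqr ?nnegrE ?cabs_ge0 //.
    apply: le_trans (_ : rowsq (mxH G) p / c' <= _); last first.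
      by rewrite ler_pM2r ?invr_gt0.
    apply: (row_bound (X := mxH (D *m Lm) *m U *m Sinv rho) VV) => //.
      by rewrite (svd_V svd) /Zmat -/D -/Lm -/G mxH_mul !mulmxA.
    move=> x.
    have Hd : forall k, (mxH (mxH G) *m mxH G) k k = ((N%:R)%:C)%C.
      by move=> k; rewrite mxHK Ggram_gamma // subrr gamma0.
    have Ho : forall k l, l != k -> cabs ((mxH (mxH G) *m mxH G) k l) <=
        cabs (gammaS s ((L l)%:Z - (L k)%:Z)).
      by move=> k l _; rewrite mxHK Ggram_gamma.
    have h1 := gram_lb Hd Ho x.
    have h2 := off_cs x (fun k l => cabs_ge0 (gammaS s ((L l)%:Z - (L k)%:Z))).
    rewrite -/B2 in h2.
    rewrite /c'; lra.
  apply: le_trans (coh_bound _ _ hV) _; first by rewrite divr_ge0 ?ltW.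
  have -> : (N + Lmax)%:R / K%:R * (K%:R / c') = (N + Lmax)%:R / c' :> R.
    by field; rewrite (gt_eqF Kr) (gt_eqF cpos').
  apply: ler_wpM2l; first exact: ltW n2r.
  by rewrite lef_pV2 ?posrE.
split => //; move=> i j.
have hUi := coh_row U i K0.
have hVj := coh_row V j K0.
rewrite -/muU in hUi; rewrite -/muV in hVj.
have e : (U *m mxH V) i j = \sum_c U i c * cconj (V j c).
  by rewrite mxE; apply: eq_bigr => c1 _; rewrite !mxE.
have cs := cabs_dot (fun c => U i c) (fun c => cconj (V j c)).
rewrite -e in cs.
have e2 : \sum_c cabs (cconj (V j c)) ^+ 2 = rowsq V j.
  by apply: eq_bigr => c1 _; rewrite cabs_conj.
rewrite e2 -/(rowsq U i) in cs.
have m1 : muU <= mu0 by rewrite /mu0 le_max lexx.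
have m2 : muV <= mu0 by rewrite /mu0 le_max lexx orbT.
have r1 := rowsq_ge0 U i.
have r2 := rowsq_ge0 V j.
have a0 : 0 < K%:R / Q%:R :> R by rewrite divr_gt0.
have b0 : 0 < K%:R / (N + Lmax)%:R :> R by rewrite divr_gt0.
have u0 : 0 <= muU.
  have : 0 <= K%:R / Q%:R * muU by apply: le_trans hUi.
  by rewrite pmulr_rge0.
have v0 : 0 <= muV.
  have : 0 <= K%:R / (N + Lmax)%:R * muV by apply: le_trans hVj.
  by rewrite pmulr_rge0.
have z0 : 0 <= mu0 by apply: le_trans m1.
have h3 : rowsq U i * rowsq V j <= K%:R / Q%:R * mu0 * (K%:R / (N + Lmax)%:R * mu0).
  apply: le_trans (_ : K%:R / Q%:R * muU * (K%:R / (N + Lmax)%:R * muV) <= _).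
    by apply: ler_pM => //.
  apply: ler_pM; [by rewrite mulr_ge0 // ltW | by rewrite mulr_ge0 // ltW | by rewrite (ler_pM2l a0) | by rewrite (ler_pM2l b0)].
have E : K%:R / Q%:R * mu0 * (K%:R / (N + Lmax)%:R * mu0) =
    (Num.sqrt K%:R * mu0 * Num.sqrt (K%:R / (Q%:R * (N + Lmax)%:R))) ^+ 2 :> R.
  rewrite !exprMn !sqr_sqrtr ?ler0n ?divr_ge0 ?mulr_ge0 ?ler0n //.
  by field; rewrite -natrD (gt_eqF n2r) (gt_eqF Qr).
rewrite /mu1 -(ler_sqr (x:=_) (y:=_)) ?nnegrE ?cabs_ge0 ?mulr_ge0 ?sqrtr_ge0 //.
rewrite -E; apply: le_trans cs h3.
Qed.
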